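(* Each of VCPNEW, VCOP and VCUP is equivalent to the minimum weight vertex cover problem (MWVCP): every instance of one can be formulated as an instance of the other on the same graph so that an optimal solution of the new instance is an optimal solution of the original instance.
   Context: Let $G=(V,E)$ be a graph, with vertex weights $c_i\in\mathbb{R}$ and edge weights $q^1_{ij},q^2_{ij}\in\mathbb{R}$. A vertex cover is a set $P\subseteq V$ containing at least one endpoint of every edge. For $P\subseteq V$ let $E_1(P)$ be the edges with exactly one endpoint in $P$ and $E_2(P)$ the edges with both endpoints in $P$. VCPNEW is to find a vertex cover $P$ minimizing $\sum_{i\in P}c_i+\sum_{(i,j)\in E_1(P)}q^1_{ij}+\sum_{(i,j)\in E_2(P)}q^2_{ij}$; VCOP is the special case $q^1\equiv0$; VCUP is the special case $q^2\equiv0$. MWVCP: given real vertex weights $w_i$, find a vertex cover $P$ minimizing $\sum_{i\in P}w_i$. *)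

(* Defs.v *)
From mathcomp Require Import all_boot all_order all_algebra.
Set Implicit Arguments. Unset Strict Implicit. Unset Printing Implicit Defensive.
Import Order.TTheory GRing.Theory Num.Theory.
Local Open Scope ring_scope.

(* A (finite, loopless, possibly multi-) graph G = (V, E): the edge e : E has
   endpoints [src e] and [dst e], assumed distinct in the theorem. *)

Section VC.
Variables (R : realFieldType) (V E : finType) (src dst : E -> V).

Definition nends (P : {set V}) (e : E) : nat := (src e \in P) + (dst e \in P).

Definition is_vcover (P : {set V}) : Prop := forall e : E, (0 < nends P e)%N.

Definition E1 (P : {set V}) : {set E} := [set e | nends P e == 1%N].
Definition E2 (P : {set V}) : {set E} := [set e | nends P e == 2%N].

Definition vcpnew_cost (c : V -> R) (q1 q2 : E -> R) (P : {set V}) : R :=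
  \sum_(i in P) c i + \sum_(e in E1 P) q1 e + \sum_(e in E2 P) q2 e.

Definition vcop_cost (c : V -> R) (q2 : E -> R) (P : {set V}) : R :=
  vcpnew_cost c (fun _ => 0) q2 P.
Definition vcup_cost (c : V -> R) (q1 : E -> R) (P : {set V}) : R :=
  vcpnew_cost c q1 (fun _ => 0) P.

Definition mwvc_cost (w : V -> R) (P : {set V}) : R := \sum_(i in P) w i.

Definition optimal_vc (f : {set V} -> R) (P : {set V}) : Prop :=
  is_vcover P /\ forall Q : {set V}, is_vcover Q -> f P <= f Q.

End VC.

(* Main.v *)
Require Import Defs.
From mathcomp Require Import all_boot all_order all_algebra.
From mathcomp Require Import ring.
Import Order.TTheory GRing.Theory Num.Theory.
Local Open Scope ring_scope.

Section H.
Variables (R : realFieldType) (V E : finType) (src dst : E -> V).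

Lemma opt_transfer (f g : {set V} -> R) (K : R) :
  (forall P, is_vcover src dst P -> f P = g P + K) ->
  forall P, optimal_vc src dst g P -> optimal_vc src dst f P.
Proof.
move=> H P [cP oP]; split=> // Q cQ.
by rewrite !H // lerD2r; apply: oP.
Qed.

Definition wof (c : V -> R) (q1 q2 : E -> R) (i : V) : R :=
  c i + \sum_(e | src e == i) (q2 e - q1 e) + \sum_(e | dst e == i) (q2 e - q1 e).

Lemma sum_src (P : {set V}) (d : E -> R) (p : E -> V) :
  \sum_(i in P) \sum_(e | p e == i) d e = \sum_(e | p e \in P) d e.
Proof.
rewrite (partition_big p (fun i => i \in P)) //=.
apply: eq_bigr => i iP; apply: eq_bigl => e.
by case: (p e =P i) => [->|]; rewrite ?iP ?andbF.
Qed.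

Lemma key (c : V -> R) (q1 q2 : E -> R) P :
  is_vcover src dst P ->
  vcpnew_cost src dst c q1 q2 P =
  mwvc_cost (wof c q1 q2) P + \sum_e (2%:R * q1 e - q2 e).
Proof.
move=> cP; rewrite /vcpnew_cost /mwvc_cost /wof !big_split /= !sum_src.
rewrite -!addrA; congr (_ + _).
rewrite !(big_mkcond (fun e => _ \in _)) /= -!big_split /=.
apply: eq_bigr => e _; have := cP e; rewrite /E1 /E2 !inE /nends.
case: (src e \in P); case: (dst e \in P) => //= _; rewrite ?addr0 ?add0r.
- rewrite mulr2n; ring.
- ring.
- ring.
Qed.
End H.

Theorem theorem7 (R : realFieldType) (V E : finType) (src dst : E -> V)
  (loopless : forall e : E, src e != dst e) :
  (* VCPNEW <-> MWVCP *)
  ((forall (c : V -> R) (q1 q2 : E -> R), exists w : V -> R,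
      forall P : {set V}, optimal_vc src dst (mwvc_cost w) P ->
        optimal_vc src dst (vcpnew_cost src dst c q1 q2) P) /\
   (forall w : V -> R, exists (c : V -> R) (q1 q2 : E -> R),
      forall P : {set V}, optimal_vc src dst (vcpnew_cost src dst c q1 q2) P ->
        optimal_vc src dst (mwvc_cost w) P)) /\
  (* VCOP <-> MWVCP *)
  ((forall (c : V -> R) (q2 : E -> R), exists w : V -> R,
      forall P : {set V}, optimal_vc src dst (mwvc_cost w) P ->
        optimal_vc src dst (vcop_cost src dst c q2) P) /\
   (forall w : V -> R, exists (c : V -> R) (q2 : E -> R),
      forall P : {set V}, optimal_vc src dst (vcop_cost src dst c q2) P ->
        optimal_vc src dst (mwvc_cost w) P)) /\
  (* VCUP <-> MWVCP *)
  ((forall (c : V -> R) (q1 : E -> R), exists w : V -> R,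
      forall P : {set V}, optimal_vc src dst (mwvc_cost w) P ->
        optimal_vc src dst (vcup_cost src dst c q1) P) /\
   (forall w : V -> R, exists (c : V -> R) (q1 : E -> R),
      forall P : {set V}, optimal_vc src dst (vcup_cost src dst c q1) P ->
        optimal_vc src dst (mwvc_cost w) P)).
Proof.
have A : forall (c : V -> R) (q1 q2 : E -> R), exists w : V -> R,
      forall P : {set V}, optimal_vc src dst (mwvc_cost w) P ->
        optimal_vc src dst (vcpnew_cost src dst c q1 q2) P.
  move=> c q1 q2; exists (@wof R V E src dst c q1 q2).
  by apply: opt_transfer => P cP; apply: (@key R V E src dst).
have B : forall (w : V -> R) P, is_vcover src dst P ->
   mwvc_cost w P = vcpnew_cost src dst w (fun _ => 0) (fun _ => 0) P + 0.
  by move=> w P _; rewrite /vcpnew_cost /mwvc_cost (big1 _ (fun e => e \in E2 _ _ _)) // (big1 _ (fun e => e \in E1 _ _ _)) // !addr0.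
split; [|split]; split.
- exact: A.
- move=> w; exists w, (fun _ => 0), (fun _ => 0); exact: (@opt_transfer R V E src dst _ _ _ (B w)).
- move=> c q2; exact: A.
- move=> w; exists w, (fun _ => 0); exact: (@opt_transfer R V E src dst _ _ _ (B w)).
- move=> c q1; exact: A.
- move=> w; exists w, (fun _ => 0); exact: (@opt_transfer R V E src dst _ _ _ (B w)).
Qed.
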